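(* Let $V=\mathbb{K}^r$ be a finite-dimensional vector space over a field $\mathbb{K}$ and let $\Gamma$ be a locally finite graph. Then a locally specifiable linear map $\tau:V^\Gamma\to V^\Gamma$ is surjective if and only if its transpose $\tau'$ is pre-injective.
   Context: $V^\Gamma$ is the space of all maps from the vertex set of $\Gamma$ to $V$, and $V^\Gamma_0$ the subspace of finitely supported maps. A linear map $\tau:V^\Gamma\to V^\Gamma$ is locally specifiable if $\tau(f)(x)$ depends only on $f(x)$ and the values $f(y)$ for $y\sim x$; equivalently there are $r\times r$ matrices $A_{xy}$ (for $y=x$ or $y\sim x$) with $\tau(f)(x)=A_{xx}f(x)+\sum_{y\sim x}A_{xy}f(y)$. Its transpose $\tau'$ is the locally specifiable linear map whose matrix with respect to the basis $\{\delta_x^i\}$ of $V^\Gamma_0$ ($\delta_x^i(x)=e_i$, $\delta_x^i(y)=0$ for $y\ne x$) is the transpose of that of $\tau$, i.e. $\tau'(f)(x)=A_{xx}^{T}f(x)+\sum_{y\sim x}A_{yx}^{T}f(y)$. A linear map on $V^\Gamma$ is pre-injective if its restriction to $V^\Gamma_0$ is injective. *)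

(* Defs.v *)
From HB Require Import structures.
From mathcomp Require Import all_boot all_order all_algebra.
Set Implicit Arguments. Unset Strict Implicit. Unset Printing Implicit Defensive.
Import GRing.Theory.
Local Open Scope ring_scope.

(* A locally finite graph Gamma on vertex type T (an eqType, possibly infinite)
   is given by its neighbour lists: nbrs x is the finite duplicate-free list of
   the neighbours of x; adjacency y ~ x means y \in nbrs x. *)
Definition locally_finite_graph (T : eqType) (nbrs : T -> seq T) : Prop :=
  (forall x, uniq (nbrs x)) /\
  (forall x y, (y \in nbrs x) = (x \in nbrs y)) /\
  (forall x, x \notin nbrs x).

Definition cfg (K : fieldType) (r : nat) (T : Type) := T -> 'cV[K]_r.

Definition locally_specifiable_by (K : fieldType) (r : nat) (T : eqType)
  (nbrs : T -> seq T) (tau : cfg K r T -> cfg K r T) (A : T -> T -> 'M[K]_r) : Prop :=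
  forall f x, tau f x = A x x *m f x + \sum_(y <- nbrs x) A x y *m f y.

Definition transpose_map (K : fieldType) (r : nat) (T : eqType)
  (nbrs : T -> seq T) (A : T -> T -> 'M[K]_r) : cfg K r T -> cfg K r T :=
  fun f x => (A x x)^T *m f x + \sum_(y <- nbrs x) (A y x)^T *m f y.

Definition fin_supp (K : fieldType) (r : nat) (T : eqType) (f : cfg K r T) : Prop :=
  exists s : seq T, forall x, x \notin s -> f x = 0.

Definition pre_injective (K : fieldType) (r : nat) (T : eqType)
  (sigma : cfg K r T -> cfg K r T) : Prop :=
  forall f g, fin_supp f -> fin_supp g -> sigma f = sigma g -> f = g.

Definition surjective_map (A B : Type) (h : A -> B) : Prop :=
  forall b, exists a, h a = b.

(* Main.v *)
From HB Require Import structures.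
From mathcomp Require Import all_boot all_order all_algebra.
From mathcomp Require Import boolp classical_sets functions.
Require Import Defs.
Set Implicit Arguments. Unset Strict Implicit. Unset Printing Implicit Defensive.
Import GRing.Theory.
Local Open Scope ring_scope.

Definition linrel (K : fieldType) (V W : lmodType K) (F : V -> W -> Prop) :=
  [/\ F 0 0, (forall u a v b, F u a -> F v b -> F (u+v) (a+b)),
      (forall c u a, F u a -> F (c*:u) (c*:a)) & (forall u a b, F u a -> F u b -> a = b)].

Lemma extend_linrel (K : fieldType) (V W : lmodType K) (F0 : V -> W -> Prop) :
  linrel F0 -> exists F : V -> W -> Prop, [/\ linrel F, (forall u a, F0 u a -> F u a)
    & (forall u, exists a, F u a)].
Proof.
move=> HF0.
pose X := {F : V -> W -> Prop | linrel F /\ (forall u a, F0 u a -> F u a)}.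
pose R : rel X := fun s t => `[< forall u a, sval s u a -> sval t u a >].
have RP s t : R s t <-> (forall u a, sval s u a -> sval t u a).
  by split => [/asboolP|?]; [|apply/asboolP].
pose x0 : X := exist _ F0 (conj HF0 (fun u a h => h)).
have [m mmax] : exists t, forall s, R t s -> s = t.
  apply: Zorn.
  - by move=> t; apply/asboolP.
  - by move=> a b c /asboolP Hab /asboolP Hbc; apply/asboolP => u x /Hab /Hbc.
  - case=> s Hs; case=> t Ht; move=> /asboolP Hst /asboolP Hts; rewrite /= in Hst Hts.
    have e : s = t by apply/funext => u; apply/funext => a; apply/propext; split; [apply: Hst|apply: Hts].
    subst t; congr exist; exact: Prop_irrelevance.
  move=> A Atot.
  pose U u a := exists G : X, (G = x0 \/ A G) /\ sval G u a.
  have dom G1 G2 : (G1 = x0 \/ A G1) -> (G2 = x0 \/ A G2) ->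
     exists G3 : X, [/\ (G3 = x0 \/ A G3), R G1 G3 & R G2 G3].
    move=> [->|A1] [->|A2].
    - by exists x0; split; [left|apply/asboolP => u a|apply/asboolP => u a].
    - exists G2; split; [by right| |by apply/asboolP => u a]; apply/asboolP => u a /=.
      by case: G2 A2 => G [_ H] _ /=; apply: H.
    - exists G1; split; [by right|by apply/asboolP => u a|]; apply/asboolP => u a /=.
      by case: G1 A1 => G [_ H] _ /=; apply: H.
    - have [H12|H21] := Atot _ _ A1 A2.
      + by exists G2; split; [right|exact: H12|apply/asboolP => u a].
      + by exists G1; split; [right|apply/asboolP => u a|exact: H21].
  have linU : linrel U.
    split.
    - by exists x0; split; [left|case: (HF0)].
    - move=> u a v b [G1 [H1 g1]] [G2 [H2 g2]].
      have [G3 [H3 /asboolP R13 /asboolP R23]] := dom _ _ H1 H2.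
      exists G3; split => //; case: G3 {H3} R13 R23 => G [[_ Ha _ _] _] /= R13 R23.
      by apply: Ha; [apply: R13|apply: R23].
    - move=> c u a [G1 [H1 g1]]; exists G1; split => //.
      by case: G1 {H1} g1 => G [[_ _ Hs _] _] /=; apply: Hs.
    - move=> u a b [G1 [H1 g1]] [G2 [H2 g2]].
      have [G3 [H3 /asboolP R13 /asboolP R23]] := dom _ _ H1 H2.
      case: G3 {H3} R13 R23 => G [[_ _ _ Hf] _] /= R13 R23.
      by apply: (Hf u); [apply: R13|apply: R23].
  have subU : forall u a, F0 u a -> U u a by move=> u a h; exists x0; split; [left|].
  exists (exist _ U (conj linU subU)) => s As; apply/asboolP => u a h /=.
  by exists s; split; [right|].
case: m mmax => F [linF subF] mmax.
exists F; split => // u; apply: contrapT => nu.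
have nu' : forall a, ~ F u a by move=> a h; apply: nu; exists a.
case: (linF) => F00 Fadd Fscale Ffun.
pose F' w b := exists v t, F v b /\ w = v + t *: u.
have linF' : linrel F'.
  split.
  - by exists 0, 0; split => //; rewrite scale0r addr0.
  - move=> w1 b1 w2 b2 [v1 [t1 [h1 ->]]] [v2 [t2 [h2 ->]]].
    exists (v1 + v2), (t1 + t2); split; first exact: (Fadd).
    by rewrite scalerDl addrACA.
  - move=> c w b [v [t [h ->]]]; exists (c *: v), (c * t); split; first exact: (Fscale).
    by rewrite scalerDr scalerA.
  - move=> w b1 b2 [v1 [t1 [h1 ->]]] [v2 [t2 [h2 e]]].
    have [et|nt] := eqVneq t1 t2.
      subst t2; move/addIr: e => e; subst v2; exact: Ffun h1 h2.
    exfalso; apply: (nu' ((t1 - t2)^-1 *: (b2 - b1))).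
    have -> : u = (t1 - t2)^-1 *: (v2 - v1).
      have e' : (t1 - t2) *: u = v2 - v1.
        by rewrite scalerBl; apply/eqP; rewrite eq_sym subr_eq [_ - _ + v1]addrC addrA e addrK.
      by rewrite -e' scalerA mulVf ?scale1r // subr_eq0.
    apply: (Fscale); apply: (Fadd) => //.
    by rewrite -scaleN1r -[- b1]scaleN1r; apply: (Fscale).
have subF' : forall w b, F0 w b -> F' w b.
  by move=> w b h; exists w, 0; split; [apply: (subF)|rewrite scale0r addr0].
have := mmax (exist _ F' (conj linF' subF')).
have hR : R (exist _ F (conj linF subF)) (exist _ F' (conj linF' subF')).
  by apply/asboolP => w b h; exists w, 0; split => //; rewrite scale0r addr0.
move=> /(_ hR) [] eF'; apply: (nu' 0); rewrite -eF'.
by exists 0, 1; split => //; rewrite scale1r add0r.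
Qed.

Lemma big_uniq_eq (T : eqType) (M : nmodType) (s1 s2 : seq T) (F : T -> M) :
  uniq s1 -> uniq s2 ->
  (forall x, x \in s1 -> x \notin s2 -> F x = 0) ->
  (forall x, x \in s2 -> x \notin s1 -> F x = 0) ->
  \sum_(x <- s1) F x = \sum_(x <- s2) F x.
Proof.
move=> u1 u2 h1 h2.
rewrite (bigID (mem s2)) /= [X in _ + X]big1_seq ?addr0; last first.
  by move=> x /andP[nx xs]; apply: h1.
rewrite [RHS](bigID (mem s1)) /= [X in _ + X]big1_seq ?addr0; last first.
  by move=> x /andP[nx xs]; apply: h2.
rewrite -[LHS]big_filter -[RHS]big_filter; apply: perm_big; apply: uniq_perm; rewrite ?filter_uniq //.
by move=> x; rewrite !mem_filter andbC.
Qed.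

Lemma sum_delta (T : eqType) (M : nmodType) (s : seq T) (x : T) (F : T -> M) :
  uniq s -> \sum_(y <- s) (if y == x then F y else 0) = if x \in s then F x else 0.
Proof.
elim: s => [|y s IH] /=; first by rewrite big_nil.
move=> /andP[ys us]; rewrite big_cons IH // inE.
have [e|nyx] := eqVneq y x; last by rewrite add0r.
by rewrite -e (negbTE ys) addr0.
Qed.

Lemma fct_app_sum (I T : Type) (M : nmodType) (r : seq I) (f : I -> T -> M) x :
  (\sum_(i <- r) f i) x = \sum_(i <- r) f i x.
Proof. by rewrite fct_sumE. Qed.

Lemma delta_pair (r : nat) (K : fieldType) (i : 'I_r) (v : 'cV[K]_r) :
  (v^T *m delta_mx i (ord0 : 'I_1)) ord0 ord0 = v i ord0.
Proof.
rewrite -[v^T *m _]trmxK trmx_mul trmx_delta trmxK -rowE !mxE.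
by [].
Qed.

Lemma fscaleE (T : Type) (K : pzRingType) (V : lmodType K) (c : K) (h : T -> V) x :
  (c *: h) x = c *: h x.
Proof. by []. Qed.

Lemma faddE (T : Type) (V : nmodType) (h1 h2 : T -> V) x :
  (h1 + h2) x = h1 x + h2 x.
Proof. by []. Qed.

Lemma fsubE (T : Type) (V : zmodType) (h1 h2 : T -> V) x :
  (h1 - h2) x = h1 x - h2 x.
Proof. by []. Qed.

Lemma trD (R : pzSemiRingType) m n (B C : 'M[R]_(m, n)) : (B + C)^T = B^T + C^T.
Proof. by apply/matrixP => i j; rewrite !mxE. Qed.

Lemma tr_sum (R : pzSemiRingType) m n (I : Type) (l : seq I) (F : I -> 'M[R]_(m, n)) :
  (\sum_(i <- l) F i)^T = \sum_(i <- l) (F i)^T.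
Proof.
elim: l => [|i l IH]; first by rewrite !big_nil trmx0.
by rewrite !big_cons trD IH.
Qed.

Definition tauA (K : fieldType) (r : nat) (T : eqType) (nbrs : T -> seq T)
  (A : T -> T -> 'M[K]_r) (f : T -> 'cV[K]_r) x :=
  A x x *m f x + \sum_(y <- nbrs x) A x y *m f y.

Lemma tr_add (K : fieldType) (r : nat) (T : eqType) (nbrs : T -> seq T)
  (A : T -> T -> 'M[K]_r) (g1 g2 : T -> 'cV[K]_r) :
  transpose_map nbrs A (g1 + g2) =
  (transpose_map nbrs A g1 : T -> 'cV[K]_r) + transpose_map nbrs A g2.
Proof.
apply/funext => x; rewrite faddE /transpose_map /= faddE mulmxDr.
under eq_bigr do rewrite faddE mulmxDr.
by rewrite big_split /= addrACA.
Qed.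

Lemma tr_scale (K : fieldType) (r : nat) (T : eqType) (nbrs : T -> seq T)
  (A : T -> T -> 'M[K]_r) (c : K) (g : T -> 'cV[K]_r) :
  transpose_map nbrs A (c *: g) = c *: (transpose_map nbrs A g : T -> 'cV[K]_r).
Proof.
apply/funext => x; rewrite fscaleE /transpose_map /= fscaleE scalerDr scaler_sumr -scalemxAr.
by congr (_ + _); apply: eq_bigr => y _; rewrite fscaleE scalemxAr.
Qed.

Lemma tr_sub (K : fieldType) (r : nat) (T : eqType) (nbrs : T -> seq T)
  (A : T -> T -> 'M[K]_r) (g1 g2 : T -> 'cV[K]_r) :
  transpose_map nbrs A (g1 - g2) =
  (transpose_map nbrs A g1 : T -> 'cV[K]_r) - transpose_map nbrs A g2.
Proof. by rewrite tr_add -scaleN1r tr_scale scaleN1r. Qed.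

Lemma tr_vanish (K : fieldType) (r : nat) (T : eqType) (nbrs : T -> seq T)
  (A : T -> T -> 'M[K]_r) (g : T -> 'cV[K]_r) (s S : seq T) :
  locally_finite_graph nbrs ->
  (forall x, x \notin s -> g x = 0) -> {subset s <= S} ->
  (forall x y, x \in s -> y \in nbrs x -> y \in S) ->
  forall y, y \notin S -> transpose_map nbrs A g y = 0.
Proof.
move=> [_ [sym _]] gs sS nS y yS.
have ys : y \notin s by apply: contra yS; apply: sS.
rewrite /transpose_map gs // mulmx0 add0r big1_seq // => x /andP[_ xn].
have xs : x \notin s by apply: contra yS => xs; apply: (nS x) => //; rewrite sym.
by rewrite gs // mulmx0.
Qed.

Lemma cover_exists (T : eqType) (nbrs : T -> seq T) (s : seq T) :
  exists S, [/\ uniq S, {subset s <= S} &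
    (forall x y, x \in s -> y \in nbrs x -> y \in S)].
Proof.
exists (undup (s ++ flatten [seq nbrs x | x <- s])); split.
- exact: undup_uniq.
- by move=> x xs; rewrite mem_undup mem_cat xs.
- move=> x y xs yn; rewrite mem_undup mem_cat; apply/orP; right.
  by apply/flatten_mapP; exists x.
Qed.

Lemma adjoint (K : fieldType) (r : nat) (T : eqType) (nbrs : T -> seq T)
  (A : T -> T -> 'M[K]_r) (f g : T -> 'cV[K]_r) (s S : seq T) :
  locally_finite_graph nbrs -> uniq s -> uniq S ->
  (forall x, x \notin s -> g x = 0) -> {subset s <= S} ->
  (forall x y, x \in s -> y \in nbrs x -> y \in S) ->
  \sum_(x <- s) (tauA nbrs A f x)^T *m g x =
  \sum_(y <- S) (f y)^T *m transpose_map nbrs A g y.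
Proof.
move=> [un [sym _]] us uS gs sS nS.
pose psi x y := (f y)^T *m ((A x y)^T *m g x).
have e1 x : (tauA nbrs A f x)^T *m g x =
    (f x)^T *m ((A x x)^T *m g x) + \sum_(y <- nbrs x) psi x y.
  rewrite /tauA trD mulmxDl trmx_mul -mulmxA; congr (_ + _).
  rewrite tr_sum mulmx_suml; apply: eq_bigr => y _.
  by rewrite trmx_mul /psi mulmxA.
have e2 y : (f y)^T *m transpose_map nbrs A g y =
    (f y)^T *m ((A y y)^T *m g y) + \sum_(x <- nbrs y) psi x y.
  by rewrite /transpose_map mulmxDr mulmx_sumr.
rewrite (eq_bigr _ (fun x _ => e1 x)) (eq_bigr _ (fun y _ => e2 y)) !big_split /=.
congr (_ + _).
  apply: big_uniq_eq => // x.
    by move=> xs; rewrite (sS x xs).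
  by move=> _ xs; rewrite gs // !mulmx0.
transitivity (\sum_(x <- s) \sum_(y <- S) (if y \in nbrs x then psi x y else 0)).
  apply: eq_big_seq => x xs.
  have -> : \sum_(y <- nbrs x) psi x y =
      \sum_(y <- nbrs x) (if y \in nbrs x then psi x y else 0).
    by apply: eq_big_seq => y ->.
  apply: big_uniq_eq => // y.
    by move=> yn; rewrite (nS x y xs yn).
  by move=> _ /negbTE ->.
rewrite exchange_big; apply: eq_big_seq => y yS.
have -> : \sum_(x <- nbrs y) psi x y =
    \sum_(x <- nbrs y) (if y \in nbrs x then psi x y else 0).
  by apply: eq_big_seq => x xn; rewrite sym xn.
apply: big_uniq_eq => // x.
  by move=> _ xn; rewrite sym (negbTE xn).
by move=> _ xs; rewrite /psi gs // !mulmx0; case: ifP.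
Qed.

Lemma delta_pair2 (r : nat) (K : fieldType) (i : 'I_r) (v : 'cV[K]_r) :
  ((delta_mx i (ord0 : 'I_1))^T *m v) ord0 ord0 = v i ord0.
Proof. by rewrite trmx_delta -rowE mxE. Qed.

Lemma linrel_sum (K : fieldType) (V W : lmodType K) (F : V -> W -> Prop)
  (I : Type) (l : seq I) (v : I -> V) (a : I -> W) :
  linrel F -> (forall i, F (v i) (a i)) ->
  F (\sum_(i <- l) v i) (\sum_(i <- l) a i).
Proof.
move=> [F00 Fadd _ _] h; elim: l => [|i l IH]; first by rewrite !big_nil.
by rewrite !big_cons; apply: Fadd.
Qed.

Definition del (K : fieldType) (r : nat) (T : eqType) (x : T) (i : 'I_r) :
  T -> 'cV[K]_r := fun y => if y == x then delta_mx i ord0 else 0.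
Arguments del {K r T}.

Lemma expand (K : fieldType) (r : nat) (T : eqType) (S : seq T) (u : T -> 'cV[K]_r) :
  uniq S -> (forall x, x \notin S -> u x = 0) ->
  u = \sum_(y <- S) \sum_(i < r) u y i ord0 *: del y i.
Proof.
move=> uS uv; apply/funext => x; rewrite fct_app_sum.
have e y : (\sum_(i < r) u y i ord0 *: del y i) x =
    if y == x then \sum_(i < r) u y i ord0 *: delta_mx i ord0 else 0.
  rewrite fct_app_sum; under eq_bigr do rewrite fscaleE.
  rewrite /del eq_sym; case: eqP => _ //.
  by rewrite big1 // => i _; rewrite scaler0.
rewrite (eq_bigr _ (fun y _ => e y)) sum_delta //.
have -> : \sum_(i < r) u x i ord0 *: delta_mx i ord0 = u x.
  rewrite [RHS]matrix_sum_delta; apply: eq_bigr => i _.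
  by rewrite big_ord1.
by case: ifP => // /negbT /uv ->.
Qed.

Lemma fzeroE (T : Type) (V : nmodType) x : (0 : T -> V) x = 0.
Proof. by []. Qed.

Definition pr (K : fieldType) (r : nat) (T : eqType) (s : seq T) (h g : T -> 'cV[K]_r) : 'M[K]_1 :=
  \sum_(x <- s) (h x)^T *m g x.

Lemma pr_indep (K : fieldType) (r : nat) (T : eqType) (s s' : seq T) (h g : T -> 'cV[K]_r) :
  uniq s -> uniq s' -> (forall x, x \notin s -> g x = 0) -> (forall x, x \notin s' -> g x = 0) ->
  pr s h g = pr s' h g.
Proof.
move=> u u' g1 g2; apply: big_uniq_eq => // x _ xn.
  by rewrite g2 // mulmx0.
by rewrite g1 // mulmx0.
Qed.

Theorem theorem1p8 (K : fieldType) (r : nat) (T : eqType) (nbrs : T -> seq T)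
  (tau : cfg K r T -> cfg K r T) (A : T -> T -> 'M[K]_r) :
  locally_finite_graph nbrs ->
  locally_specifiable_by nbrs tau A ->
  (surjective_map tau <-> pre_injective (transpose_map nbrs A)).
Proof.
move=> LFG Htau.
have tauE : forall f, tau f = tauA nbrs A f by move=> f; apply/funext => x; rewrite Htau.
split.
- move=> Hsurj f g [s1 h1] [s2 h2] e.
  pose d : T -> 'cV[K]_r := (f : T -> 'cV[K]_r) - g.
  pose s := undup (s1 ++ s2).
  have ds : forall x, x \notin s -> d x = 0.
    move=> x; rewrite mem_undup mem_cat negb_or => /andP[n1 n2].
    by rewrite /d fsubE h1 // h2 // subr0.
  have td : transpose_map nbrs A d = 0 by rewrite /d tr_sub e subrr.
  have dE : d = (f : T -> 'cV[K]_r) - g by [].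
  clearbody d.
  suff d0 : d = 0 by apply/eqP; rewrite -subr_eq0 -dE d0.
  apply/funext => x0; suff dx : d x0 = 0 by rewrite dx.
  apply/matrixP => i j; rewrite (ord1 j) mxE.
  have [S [uS sS nS]] := cover_exists nbrs s.
  have [f' hf'] := Hsurj (del x0 i).
  have := adjoint A f' LFG (undup_uniq _) uS ds sS nS.
  have e0 : \sum_(y <- S) (f' y)^T *m transpose_map nbrs A d y = 0.
    by rewrite td; apply: big1 => y _; exact: mulmx0.
  rewrite -tauE hf' e0.
  have e3 x : (del x0 i x)^T *m d x = if x == x0 then (delta_mx i ord0)^T *m d x0 else 0.
    by rewrite /del; case: eqP => [->|_] //; rewrite trmx0 mul0mx.
  rewrite (eq_bigr _ (fun x _ => e3 x)) sum_delta ?undup_uniq //.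
  case: ifP => [_ /(congr1 (fun M : 'M[K]_1 => M ord0 ord0))|/negbT xs _].
    by rewrite delta_pair2 mxE; apply.
  by rewrite ds // mxE.
- move=> Hpi h.
  pose F0 (v : T -> 'cV[K]_r) (a : 'M[K]_1) := exists g s, [/\ uniq s,
     (forall x, x \notin s -> g x = 0), v = transpose_map nbrs A g & a = pr s h g].
  have linF0 : linrel F0.
    split.
    - exists 0, [::]; split => //.
        apply/funext => x; rewrite /transpose_map /= mulmx0 add0r big1 // => y _.
        by rewrite mulmx0.
      by rewrite /pr big_nil.
    - move=> u a v b [g1 [s1 [u1 v1 -> ->]]] [g2 [s2 [u2 v2 -> ->]]].
      exists (g1 + g2), (undup (s1 ++ s2)).
      have w1 x : x \notin undup (s1 ++ s2) -> g1 x = 0.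
        by rewrite mem_undup mem_cat negb_or => /andP[n1 _]; rewrite v1.
      have w2 x : x \notin undup (s1 ++ s2) -> g2 x = 0.
        by rewrite mem_undup mem_cat negb_or => /andP[_ n2]; rewrite v2.
      split.
      + exact: undup_uniq.
      + by move=> x xs; rewrite faddE w1 // w2 // addr0.
      + by rewrite tr_add.
      + rewrite (pr_indep h u1 (undup_uniq _) v1 w1) (pr_indep h u2 (undup_uniq _) v2 w2).
        rewrite /pr -big_split /=; apply: eq_bigr => x _.
        by rewrite faddE mulmxDr.
    - move=> c u a [g [s [us vs -> ->]]]; exists (c *: g), s; split => //.
      + by move=> x xs; rewrite fscaleE vs // scaler0.
      + by rewrite tr_scale.
      + rewrite /pr scaler_sumr; apply: eq_bigr => x _.
        by rewrite fscaleE scalemxAr.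
    - move=> u a b [g1 [s1 [u1 v1 -> ->]]] [g2 [s2 [u2 v2 e ->]]].
      have eg : g1 = g2 := Hpi g1 g2 (ex_intro _ s1 v1) (ex_intro _ s2 v2) e.
      subst g2; exact: pr_indep.
  have [F [[F00 Fadd Fscale Ffun] subF Ftot]] := extend_linrel linF0.
  have [a Ha] := choice (fun p : T * 'I_r => Ftot (del p.1 p.2)).
  pose f : T -> 'cV[K]_r := fun x => \col_i (a (x, i) ord0 ord0).
  have key (S : seq T) (u : T -> 'cV[K]_r) : uniq S -> (forall x, x \notin S -> u x = 0) ->
      F u (pr S f u).
    move=> uS uv; rewrite {1}(expand uS uv).
    have -> : pr S f u = \sum_(y <- S) \sum_(i < r) u y i ord0 *: a (y, i).
      apply: eq_bigr => y _; apply/matrixP => p q; rewrite (ord1 p) (ord1 q) !mxE summxE.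
      by apply: eq_bigr => k _; rewrite !mxE mulrC.
    apply: linrel_sum => [|y]; first by split.
    apply: linrel_sum => [|k]; first by split.
    by apply: Fscale; apply: (Ha (y, k)).
  exists f; apply/funext => x0; rewrite tauE; apply/matrixP => i j; rewrite (ord1 j).
  have un := LFG.1; have nx := LFG.2.2.
  have uS : uniq (x0 :: nbrs x0) by rewrite /= nx un.
  have gv : forall x : T, x \notin [:: x0] -> del x0 i x = 0 :> 'cV[K]_r.
    by move=> x; rewrite mem_seq1 /del => /negbTE ->.
  have sS : {subset [:: x0] <= x0 :: nbrs x0} by move=> x; rewrite !inE => ->.
  have nS : forall x y, x \in [:: x0] -> y \in nbrs x -> y \in x0 :: nbrs x0.
    by move=> x y; rewrite inE => /eqP -> yn; rewrite inE yn orbT.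
  have H1 := subF _ _ (ex_intro _ (del x0 i) (ex_intro _ [:: x0] (And4 (erefl true) gv erefl erefl))).
  have H2 := key _ _ uS (tr_vanish A LFG gv sS nS).
  have := Ffun _ _ _ H1 H2.
  rewrite /pr -(@adjoint K r T nbrs A f (del x0 i) [:: x0] (x0 :: nbrs x0) LFG (erefl true) uS gv sS nS) !big_seq1 /del eqxx.
  by move=> /(congr1 (fun M : 'M[K]_1 => M ord0 ord0)); rewrite !delta_pair.
Qed.
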